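(* Let $X\subseteq\mathbb{R}^d$ be a full-dimensional convex body and let $\lambda>0$ be such that some translate $c+\lambda^{-1}[0,1]^d$ ($c\in\mathbb{R}^d$) is contained in $X$. Then for every real $n>0$, $$\mathrm{Flt}^{\mathbb{R}}_d(X)\le\tfrac1n\,\mathrm{Flt}_d(n\cdot X)\le\tfrac{n+\lambda}{n}\,\mathrm{Flt}^{\mathbb{R}}_d(X).$$ In particular $\frac1n\mathrm{Flt}_d(nX)\to\mathrm{Flt}^{\mathbb{R}}_d(X)$ as $n\to\infty$.
   Context: Convex body: non-empty compact convex subset of $\mathbb{R}^d$; $\mathrm{width}(K)=\min_{u\in(\mathbb{Z}^d)^*\setminus\{0\}}\max_{x,y\in K}|u(x)-u(y)|$. A unimodular (resp. $\mathbb{R}$-unimodular) copy of $Y\subseteq\mathbb{R}^d$ is $\{Ay+b:y\in Y\}$ with $A\in\mathrm{GL}(d,\mathbb{Z})$ and $b\in\mathbb{Z}^d$ (resp. $b\in\mathbb{R}^d$). For bounded $X$: $\mathrm{Flt}_d(X)=\sup\{\mathrm{width}(K): K\text{ convex body not containing a unimodular copy of }X\}$ and $\mathrm{Flt}^{\mathbb{R}}_d(X)=\sup\{\mathrm{width}(K): K\text{ convex body not containing an }\mathbb{R}\text{-unimodular copy of }X\}$. *)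

(* Defs.v *)
From Stdlib Require Import Reals ZArith.
Open Scope R_scope.

(* Points of R^d are represented as functions nat -> R whose coordinates of
   index >= d vanish; subsets of R^d are predicates on such functions. *)
Definition pt := nat -> R.

Fixpoint sumd (d : nat) (f : nat -> R) : R :=
  match d with O => 0 | S k => sumd k f + f k end.

Definition inRd (d : nat) (x : pt) : Prop := forall i, (d <= i)%nat -> x i = 0.

Definition lin (d : nat) (u x : pt) : R := sumd d (fun i => u i * x i).

Definition convex (d : nat) (K : pt -> Prop) : Prop :=
  forall x y t, K x -> K y -> 0 <= t <= 1 ->
    K (fun i => t * x i + (1 - t) * y i).

Definition bounded (d : nat) (K : pt -> Prop) : Prop :=
  exists M, forall x, K x -> forall i, Rabs (x i) <= M.

Definition closed_set (d : nat) (K : pt -> Prop) : Prop :=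
  forall (s : nat -> pt) (x : pt), (forall k, K (s k)) ->
    (forall i, Un_cv (fun k => s k i) (x i)) -> K x.

Definition convex_body (d : nat) (K : pt -> Prop) : Prop :=
  (forall x, K x -> inRd d x) /\ (exists x, K x) /\ convex d K /\
  bounded d K /\ closed_set d K.

(* Dual lattice (Z^d)^*: integer vectors u (only coordinates < d matter). *)
Definition zvec := nat -> Z.
Definition zvec_nonzero (d : nat) (u : zvec) : Prop := exists i, (i < d)%nat /\ u i <> 0%Z.
Definition zR (u : zvec) : pt := fun i => IZR (u i).

(* width of K in direction u: max_{x,y in K} |u(x) - u(y)| (sup = max for compact K) *)
Definition width_dir (d : nat) (K : pt -> Prop) (u : zvec) (w : R) : Prop :=
  is_lub (fun v => exists x y, K x /\ K y /\ v = Rabs (lin d (zR u) x - lin d (zR u) y)) w.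

Definition width_of (d : nat) (K : pt -> Prop) (w : R) : Prop :=
  (exists u, zvec_nonzero d u /\ width_dir d K u w) /\
  (forall u w', zvec_nonzero d u -> width_dir d K u w' -> w <= w').

Definition zmat := nat -> nat -> Z.
Definition unimodular (d : nat) (A : zmat) : Prop :=
  exists B : zmat, forall i j, (i < d)%nat -> (j < d)%nat ->
    sumd d (fun k => IZR (A i k) * IZR (B k j)) = (if Nat.eqb i j then 1 else 0).

Definition affine (d : nat) (A : zmat) (b : pt) (y : pt) : pt :=
  fun i => if Nat.ltb i d then sumd d (fun j => IZR (A i j) * y j) + b i else 0.

Definition contains_copy (d : nat) (K X : pt -> Prop) : Prop :=
  exists (A : zmat) (b : zvec), unimodular d A /\ forall y, X y -> K (affine d A (zR b) y).

Definition contains_Rcopy (d : nat) (K X : pt -> Prop) : Prop :=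
  exists (A : zmat) (b : pt), unimodular d A /\ inRd d b /\
    forall y, X y -> K (affine d A b y).

(* The set whose supremum is Flt_d(X), resp. Flt^R_d(X). *)
Definition FltSet (d : nat) (X : pt -> Prop) (w : R) : Prop :=
  exists K, convex_body d K /\ ~ contains_copy d K X /\ width_of d K w.
Definition FltRSet (d : nat) (X : pt -> Prop) (w : R) : Prop :=
  exists K, convex_body d K /\ ~ contains_Rcopy d K X /\ width_of d K w.

(* "Flt_d(X) <= r" (as a supremum in the extended reals) *)
Definition Flt_le (d : nat) (X : pt -> Prop) (r : R) : Prop := is_upper_bound (FltSet d X) r.
Definition FltR_le (d : nat) (X : pt -> Prop) (r : R) : Prop := is_upper_bound (FltRSet d X) r.

Definition scale_set (n : R) (X : pt -> Prop) : pt -> Prop :=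
  fun z => exists x, X x /\ z = (fun i => n * x i).

(* Main.v *)
Require Import Defs.
From Stdlib Require Import Reals Lra Lia ZArith FunctionalExtensionality Classical_Prop.
Open Scope R_scope.

Lemma sumd_ext d f g : (forall i, (i < d)%nat -> f i = g i) -> sumd d f = sumd d g.
Proof. induction d; simpl; intros H; auto. rewrite IHd by (intros; apply H; lia). rewrite H by lia. auto. Qed.

Lemma sumd_scal d s f : sumd d (fun i => s * f i) = s * sumd d f.
Proof. induction d; simpl. ring. rewrite IHd. ring. Qed.

Lemma sumd_plus d f g : sumd d (fun i => f i + g i) = sumd d f + sumd d g.
Proof. induction d; simpl. ring. rewrite IHd. ring. Qed.

Lemma sumd_opp d f : sumd d (fun i => - f i) = - sumd d f.
Proof. induction d; simpl. ring. rewrite IHd. ring. Qed.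

Lemma sumd_swap n m F : sumd n (fun j => sumd m (fun k => F j k)) = sumd m (fun k => sumd n (fun j => F j k)).
Proof. induction n; simpl. induction m; simpl; auto. rewrite <- IHm. ring.
 rewrite IHn. rewrite <- sumd_plus. auto. Qed.

Lemma sumd_delta d i a : (i < d)%nat -> sumd d (fun k => (if Nat.eqb i k then 1 else 0) * a k) = a i.
Proof. induction d; intros H; simpl. lia.
 destruct (Nat.eq_dec i d). subst. rewrite Nat.eqb_refl.
 assert (Z0 : forall m, sumd m (fun _ => 0) = 0) by (induction m; simpl; [ring|rewrite IHm; ring]).
 rewrite (sumd_ext d _ (fun _ => 0)). rewrite Z0; ring.
 intros k Hk. destruct (Nat.eqb_spec d k); [lia|ring].
 rewrite IHd by lia. destruct (Nat.eqb_spec i d); [lia|ring]. Qed.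

Fixpoint zsum (d : nat) (f : nat -> Z) : Z :=
  match d with O => 0%Z | S k => (zsum k f + f k)%Z end.

Lemma IZR_zsum d f : IZR (zsum d f) = sumd d (fun j => IZR (f j)).
Proof. induction d; simpl; auto. rewrite plus_IZR, IHd. auto. Qed.

Lemma lin_scale d u s x : lin d u (fun i => s * x i) = s * lin d u x.
Proof. unfold lin. rewrite <- sumd_scal. apply sumd_ext; intros; ring. Qed.

Lemma is_lub_ext (P Q : R -> Prop) w : (forall v, P v <-> Q v) -> is_lub P w -> is_lub Q w.
Proof. intros E [H1 H2]; split. intros v Hv; apply H1, E, Hv.
 intros b Hb; apply H2. intros v Hv; apply Hb, E, Hv. Qed.

Lemma lub_img (S : R -> Prop) s w : 0 < s -> is_lub S w ->
  is_lub (fun v => exists a, S a /\ v = s * a) (s * w).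
Proof. intros Hs [H1 H2]; split.
 intros v [a [Ha ->]]. apply Rmult_le_compat_l; [lra|auto].
 intros b Hb. assert (w <= b / s). apply H2. intros a Ha.
 assert (s * a <= b) by (apply Hb; eauto).
 apply (Rmult_le_reg_l s); [lra|]. field_simplify; lra.
 apply (Rmult_le_compat_l s) in H; [|lra]. field_simplify in H; lra. Qed.

Lemma lub_img_inv (S : R -> Prop) s w : 0 < s ->
  is_lub (fun v => exists a, S a /\ v = s * a) w -> is_lub S (w / s).
Proof. intros Hs H. apply lub_img with (s := / s) in H; [|apply Rinv_0_lt_compat; auto].
 replace (w / s) with (/ s * w) by (unfold Rdiv; ring).
 eapply is_lub_ext; [|exact H]. intros v; split.
 intros [a [[b [Hb ->]] ->]]. replace (/ s * (s * b)) with b by (field; lra). auto.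
 intros Hv. exists (s * v). split. eauto. field; lra. Qed.

Lemma scale_unique s K x : 0 < s -> scale_set s K x -> K (fun i => x i / s).
Proof. intros Hs [y [Hy ->]]. replace (fun i => s * y i / s) with y; auto.
 apply functional_extensionality; intros; field; lra. Qed.

Lemma cv_scal (u : nat -> R) l a : Un_cv u l -> Un_cv (fun k => a * u k) (a * l).
Proof. intros H eps He. destruct (Req_dec a 0).
 exists O; intros; subst; unfold R_dist; rewrite !Rmult_0_l, Rminus_0_r, Rabs_R0; lra.
 assert (Ha : 0 < Rabs a) by (apply Rabs_pos_lt; auto).
 destruct (H (eps / Rabs a)) as [N HN]. apply Rdiv_lt_0_compat; auto.
 exists N; intros k Hk. specialize (HN k Hk). unfold R_dist in *.
 replace (a * u k - a * l) with (a * (u k - l)) by ring. rewrite Rabs_mult.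
 apply (Rmult_lt_compat_l (Rabs a)) in HN; auto. field_simplify in HN; lra. Qed.

Lemma scale_body d s K : 0 < s -> convex_body d K -> convex_body d (scale_set s K).
Proof. intros Hs (H1 & [x0 Hx0] & H3 & [M HM] & H5). split; [|split; [|split; [|split]]].
 - intros x [y [Hy ->]] i Hi. rewrite (H1 y Hy i Hi). ring.
 - exists (fun i => s * x0 i); exists x0; auto.
 - intros x y t [x1 [Hx1 ->]] [y1 [Hy1 ->]] Ht. exists (fun i => t * x1 i + (1 - t) * y1 i).
   split. apply H3; auto. apply functional_extensionality; intros; ring.
 - exists (s * M). intros x [y [Hy ->]] i. rewrite Rabs_mult, Rabs_right by lra.
   apply Rmult_le_compat_l; [lra|auto].
 - intros sq x Hsq Hcv. exists (fun i => x i / s). split.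
   + apply (H5 (fun k i => sq k i / s)). intros k; apply scale_unique; auto.
     intros i. unfold Rdiv.
     intros e He; destruct (cv_scal _ _ (/s) (Hcv i) e He) as [N HN]; exists N; intros k Hk.
     rewrite (Rmult_comm (sq k i)), (Rmult_comm (x i)); apply HN; auto.
   + apply functional_extensionality; intros; field; lra. Qed.

Lemma scale_wset d s K u v : 0 < s ->
  ((exists x y, scale_set s K x /\ scale_set s K y /\ v = Rabs (lin d (zR u) x - lin d (zR u) y))
  <-> (exists a, (exists x y, K x /\ K y /\ a = Rabs (lin d (zR u) x - lin d (zR u) y)) /\ v = s * a)).
Proof. intros Hs; split.
 - intros (x & y & [x1 [Hx ->]] & [y1 [Hy ->]] & ->). eexists; split. exists x1, y1; eauto.
   rewrite !lin_scale. replace (s * lin d (zR u) x1 - s * lin d (zR u) y1) with (s * (lin d (zR u) x1 - lin d (zR u) y1)) by ring.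
   rewrite Rabs_mult, (Rabs_right s) by lra. auto.
 - intros (a & (x & y & Hx & Hy & ->) & ->). exists (fun i => s * x i), (fun i => s * y i).
   split. exists x; auto. split. exists y; auto.
   rewrite !lin_scale. replace (s * lin d (zR u) x - s * lin d (zR u) y) with (s * (lin d (zR u) x - lin d (zR u) y)) by ring.
   rewrite Rabs_mult, (Rabs_right s) by lra. auto. Qed.

Lemma scale_width d s K w : 0 < s -> width_of d K w -> width_of d (scale_set s K) (s * w).
Proof. intros Hs [[u [Hu Hw]] H2]. split.
 - exists u; split; auto. unfold width_dir. eapply is_lub_ext.
   intros v; symmetry; apply scale_wset; auto. apply lub_img; auto.
 - intros u' w' Hu' Hw'. assert (width_dir d K u' (w' / s)).
   { apply lub_img_inv; auto. eapply is_lub_ext; [|exact Hw']. intros v; apply scale_wset; auto. }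
   specialize (H2 u' _ Hu' H). apply (Rmult_le_compat_l s) in H2; [|lra].
   field_simplify in H2; lra. Qed.

Lemma width_nonneg d K w : convex_body d K -> width_of d K w -> 0 <= w.
Proof. intros (_ & [x Hx] & _) [[u [_ [H _]]] _]. apply H. exists x, x. split; auto. split; auto.
 rewrite Rminus_diag, Rabs_R0; auto. Qed.

Lemma copy1 d n K X : 0 < n -> contains_copy d (scale_set n K) (scale_set n X) -> contains_Rcopy d K X.
Proof. intros Hn (A & b & HA & H).
 exists A, (fun i => if Nat.ltb i d then IZR (b i) / n else 0). split; auto. split.
 intros i Hi. destruct (Nat.ltb_spec i d); [lia|auto].
 intros y Hy. destruct (H (fun i => n * y i)) as [k [Hk E]]. exists y; auto.
 replace (affine d A _ y) with k; auto. apply functional_extensionality; intros i.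
 apply (f_equal (fun f => f i)) in E. unfold affine in *. unfold zR in E.
 destruct (Nat.ltb_spec i d).
 - rewrite (sumd_ext d _ (fun j => n * (IZR (A i j) * y j))) in E by (intros; ring).
   rewrite sumd_scal in E. apply (Rmult_eq_reg_l n); [|lra]. rewrite <- E. field; lra.
 - apply (Rmult_eq_reg_l n); lra.
Qed.

Lemma copy2 (d : nat) (n lam : R) (c : pt) (X K : pt -> Prop) (Hn : 0 < n) (Hl : 0 < lam) (HX : convex d X)
  (Hcube : forall y, inRd d y -> (forall i, (i < d)%nat -> c i <= y i <= c i + / lam) -> X y) :
  contains_Rcopy d (scale_set (/ (n + lam)) K) X -> contains_copy d K (scale_set n X).
Proof. intros (A & b & HA & Hb & H). set (s := n + lam).
 assert (Hs : 0 < s) by (unfold s; lra).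
 destruct HA as [B HB].
 set (v := fun i => sumd d (fun j => IZR (B i j) * (s * b j))).
 set (q := fun i => if Nat.ltb i d then up (v i + lam * c i) else 0%Z).
 set (p := fun i => IZR (q i) - lam * c i - v i).
 set (yc := fun i => if Nat.ltb i d then c i + p i / lam else 0).
 assert (Hyc : X yc).
 { apply Hcube. intros i Hi; unfold yc; destruct (Nat.ltb_spec i d); [lia|auto].
   intros i Hi; unfold yc, p, q; destruct (Nat.ltb_spec i d); [|lia].
   destruct (for_base_fp (v i + lam * c i)) as [F1 F2].
   split. assert (0 <= (IZR (up (v i + lam * c i)) - lam * c i - v i) / lam).
   (unfold Rdiv; apply Rmult_le_pos; [lra|left; apply Rinv_0_lt_compat; lra]). lra.
   assert ((IZR (up (v i + lam * c i)) - lam * c i - v i) / lam <= / lam).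
   unfold Rdiv; rewrite <- (Rmult_1_l (/ lam)) at 2; apply Rmult_le_compat_r. left; apply Rinv_0_lt_compat; lra. lra. lra. }
 exists A, (fun i => zsum d (fun j => (A i j * q j)%Z)). split. exists B; auto.
 intros z [x [Hx ->]].
 set (ys := fun i => n / s * x i + (1 - n / s) * yc i).
 assert (Hys : X ys). { apply HX; auto. split. (unfold Rdiv; apply Rmult_le_pos; [lra|left; apply Rinv_0_lt_compat; lra]).
   unfold Rdiv; apply (Rmult_le_reg_r s); auto; rewrite Rmult_assoc, Rinv_l by lra; unfold s; lra. }
 destruct (H ys Hys) as [k [Hk E]].
 replace (affine d A _ _) with (fun i => s * affine d A b ys i). 
 { replace (fun i => s * affine d A b ys i) with k; auto.
   rewrite E. apply functional_extensionality; intros; unfold s; field; lra. }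
 apply functional_extensionality; intros i. unfold affine, zR.
 destruct (Nat.ltb_spec i d); [|ring].
 rewrite IZR_zsum.
 rewrite Rmult_plus_distr_l, <- sumd_scal.
 (* s * ys j = n x j + q j - v j for j < d *)
 rewrite (sumd_ext d (fun j => s * (IZR (A i j) * ys j))
   (fun j => IZR (A i j) * (n * x j) + (IZR (A i j * q j) + - (IZR (A i j) * v j)))).
 2:{ intros j Hj. rewrite mult_IZR. unfold ys, yc, p. destruct (Nat.ltb_spec j d); [|lia].
     unfold s; field; lra. }
 rewrite !sumd_plus, sumd_opp.
 assert (sumd d (fun j => IZR (A i j) * v j) = s * b i) as ->.
 { unfold v. rewrite (sumd_ext d _ (fun j => sumd d (fun m => IZR (A i j) * IZR (B j m) * (s * b m)))).
   2:{ intros j _. rewrite <- sumd_scal. apply sumd_ext; intros; ring. }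
   rewrite sumd_swap.
   rewrite (sumd_ext d _ (fun m => (if Nat.eqb i m then 1 else 0) * (s * b m))).
   apply sumd_delta; auto.
   intros m Hm. rewrite <- (HB i m) by auto. rewrite (Rmult_comm _ (s * b m)), <- sumd_scal.
   apply sumd_ext; intros; ring. }
 ring.
Qed.

Theorem mainTheorem9 (d : nat) (X : pt -> Prop) (lam : R) (c : pt) :
  convex_body d X -> 0 < lam -> inRd d c ->
  (forall y, inRd d y -> (forall i, (i < d)%nat -> c i <= y i <= c i + / lam) -> X y) ->
  (forall n, 0 < n ->
     (* Flt^R_d(X) <= (1/n) Flt_d(nX) *)
     (forall r, Flt_le d (scale_set n X) r -> FltR_le d X (r / n)) /\
     (* (1/n) Flt_d(nX) <= ((n+lam)/n) Flt^R_d(X) *)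
     (forall r, FltR_le d X r -> Flt_le d (scale_set n X) ((n + lam) * r))) /\
  (* (1/n) Flt_d(nX) -> Flt^R_d(X) as n -> infinity *)
  (forall L, is_lub (FltRSet d X) L ->
     forall eps, 0 < eps -> exists N, forall n, 0 < n -> N < n ->
       forall M, is_lub (FltSet d (scale_set n X)) M -> Rabs (M / n - L) < eps).
Proof.
 intros HXb Hl Hc Hcube.
 assert (P1 : forall n, 0 < n -> forall r, Flt_le d (scale_set n X) r -> FltR_le d X (r / n)).
 { intros n Hn r Hr w (K & HK & HnK & Hw).
   assert (n * w <= r). apply Hr. exists (scale_set n K). split. apply scale_body; auto.
   split. intros C; apply HnK; eapply copy1; eauto. apply scale_width; auto.
   apply (Rmult_le_reg_l n); auto. field_simplify; lra. }
 assert (P2 : forall n, 0 < n -> forall r, FltR_le d X r -> Flt_le d (scale_set n X) ((n + lam) * r)).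
 { intros n Hn r Hr w (K & HK & HnK & Hw).
   assert (Hs : 0 < / (n + lam)) by (apply Rinv_0_lt_compat; lra).
   assert (/ (n + lam) * w <= r). apply Hr. exists (scale_set (/ (n + lam)) K). split. apply scale_body; auto.
   split. intros C; apply HnK; apply (copy2 d n lam c X K); auto. destruct HXb as (_&_&?&_); auto.
   apply scale_width; auto.
   apply (Rmult_le_compat_l (n + lam)) in H; [|lra]. field_simplify in H; lra. }
 split. intros; split; auto.
 intros L HL eps He.
 assert (HL0 : 0 <= L).
 { destruct (Classical_Prop.classic (exists w, FltRSet d X w)) as [[w Hw]|Hne].
   - destruct Hw as (K & HK & HK2 & Hw). apply Rle_trans with w. eapply width_nonneg; eauto.
     apply HL. exists K; auto.
   - assert (L <= L - 1). apply HL. intros w Hw. exfalso; eauto. lra. }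
 exists (lam * L / eps). intros n Hn HN M HM.
 assert (A1 : L <= M / n). apply HL. apply P1; auto. apply HM.
 assert (A2 : M <= (n + lam) * L). apply HM. apply P2; auto. apply HL.
 assert (lam * L < eps * n).
 { apply (Rmult_lt_compat_l eps) in HN; auto. field_simplify in HN; lra. }
 rewrite Rabs_right by lra.
 assert (M / n <= L + lam * L / n).
 { apply (Rmult_le_reg_l n); auto. field_simplify; lra. }
 assert (lam * L / n < eps).
 { apply (Rmult_lt_reg_l n); auto. field_simplify; lra. }
 lra.
Qed.
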